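(* If $(r,s,0,0)\in\mu^{-1}(0)^{rss}$, i.e. $r\in\mathfrak{b}$ has pairwise distinct diagonal entries and $[r,s]\in\mathfrak{n}^+$, then $s$ is diagonal (its lower triangular representative in $\mathfrak{gl}_n/\mathfrak{n}^+$ has all strictly lower entries zero).
   Context: $\mathfrak{b}$: upper triangular complex $n\times n$ matrices; $\mathfrak{n}^+$: strictly upper triangular matrices; $\mathfrak{b}^*=\mathfrak{gl}_n/\mathfrak{n}^+$, identified with lower triangular matrices. $\mu(r,s,i,j)=[r,s]+ij\bmod\mathfrak{n}^+$ on $\mathfrak{b}\times\mathfrak{b}^*\times\mathbb{C}^n\times(\mathbb{C}^n)^*$, and $\mu^{-1}(0)^{rss}$ is the set of zeros of $\mu$ with $r$ having pairwise distinct diagonal entries. *)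

(* Defs.v *)
From mathcomp Require Import all_boot all_order all_algebra all_field.
Set Implicit Arguments. Unset Strict Implicit. Unset Printing Implicit Defensive.
Import GRing.Theory Num.Theory.
Local Open Scope ring_scope.

Definition upper_tri (n : nat) (A : 'M[algC]_n) : Prop :=
  forall i j : 'I_n, (j < i)%N -> A i j = 0.

(* lower triangular matrices: representatives of b^* = gl_n / n^+ *)
Definition lower_tri (n : nat) (A : 'M[algC]_n) : Prop :=
  forall i j : 'I_n, (i < j)%N -> A i j = 0.

Definition strictly_upper (n : nat) (A : 'M[algC]_n) : Prop :=
  forall i j : 'I_n, (j <= i)%N -> A i j = 0.

Definition comm_mx (n : nat) (r s : 'M[algC]_n) : 'M[algC]_n :=
  r *m s - s *m r.

Definition distinct_diag (n : nat) (r : 'M[algC]_n) : Prop :=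
  forall i j : 'I_n, i != j -> r i i != r j j.

(* the moment map mu(r,s,i,j) = [r,s] + i j  mod n^+, with i a column and j a row *)
Definition mu (n : nat) (r s : 'M[algC]_n) (iv : 'cV[algC]_n) (jv : 'rV[algC]_n)
  : 'M[algC]_n := comm_mx r s + iv *m jv.

Definition in_mu0_rss (n : nat) (r s : 'M[algC]_n) (iv : 'cV[algC]_n)
  (jv : 'rV[algC]_n) : Prop :=
  [/\ upper_tri r, lower_tri s, distinct_diag r & strictly_upper (mu r s iv jv)].

(* Main.v *)
Require Import Defs.
From mathcomp Require Import all_boot all_order all_algebra all_field.
From mathcomp Require Import zify.
Local Open Scope ring_scope.
Import GRing.Theory.

Lemma subE (n : nat) (A B : 'M[algC]_n) i j : (A - B) i j = A i j - B i j.
Proof. by rewrite mxE [(- B) i j]mxE. Qed.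

Theorem mainTheorem15 (n : nat) (r s : 'M[algC]_n) :
  in_mu0_rss r s 0 0 ->
  forall i j : 'I_n, (j < i)%N -> s i j = 0.
Proof.
case=> ru sl dd su.
have key : forall d (i j : 'I_n), (j < i)%N -> (n <= (i - j) + d)%N -> s i j = 0.
  elim=> [|d IH] i j ji hn.
    by have := ltn_ord i; move: hn; rewrite addn0; lia.
  have e1 : (r *m s) i j = r i i * s i j.
    rewrite !mxE (bigD1 i) //= big1 ?addr0 // => k /eqP kne.
    case: (ltngtP k i) => [ki|ik|ki]; last by move/val_inj: ki kne => ->.
      by rewrite ru // mul0r.
    rewrite (IH k j) ?mulr0 //; first exact: ltn_trans ji ik.
    apply: leq_trans hn _; rewrite -addSnnS leq_add2r.
    lia.
  have e2 : (s *m r) i j = s i j * r j j.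
    rewrite !mxE (bigD1 j) //= big1 ?addr0 // => k /eqP kne.
    case: (ltngtP k j) => [kj|jk|kj]; last by move/val_inj: kj kne => ->.
      rewrite (IH i k) ?mul0r //; first exact: ltn_trans kj ji.
      apply: leq_trans hn _; rewrite -addSnnS leq_add2r.
      lia.
    by rewrite ru // mulr0.
  have := su i j (ltnW ji).
  have -> : mu r s 0 0 i j = r i i * s i j - s i j * r j j.
    by rewrite /mu mul0mx addr0 /Defs.comm_mx subE -e1 -e2.
  rewrite (mulrC (s i j)) -mulrBl => /eqP; rewrite mulf_eq0 => /orP[|/eqP//].
  rewrite subr_eq0 => /eqP h; exfalso.
  have nij : i != j by rewrite neq_ltn ji orbT.
  by move: (dd i j nij); rewrite h eqxx.
move=> i j ji; apply: (key n) => //; exact: leq_addl.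
Qed.
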